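(* For every $\beta>0$ and every $L,M\geq 1$, \begin{equation*} \frac{Z^{+,-}_{\mathcal{R}(L,M),\beta}}{Z^{+,+}_{\mathcal{R}(L,M),\beta}}= \Psi^{0}_{\mathcal R(L,M),\beta,\mathsf{h}^{+,+}_{L,M}}\big[\text{$\mathfrak g^{-}$ is not connected to $\mathfrak g^{+}$ in $\omega$}\big]. \end{equation*} In particular, the surface tension $\tau_{\beta}:=\liminf_{L\to\infty}\liminf_{M\to\infty}\frac{1}{L^{d-1}}\log \frac{Z^{+,+}_{\mathcal{R}(L,M),\beta}}{Z^{+,-}_{\mathcal{R}(L,M),\beta}}$ satisfies $\tau_{\beta}\geq 0$ for every $\beta>0$.
   Context: Fix $g>0$, $a\in\mathbb R$, and let $\mathrm d\rho_{g,a}(t)\propto e^{-gt^4-at^2}\mathrm dt$ on $\mathbb R$. For a finite $\Lambda\subset\mathbb Z^d$ ($d\geq2$) with nearest-neighbour edge set $E(\Lambda)$ and a field $\mathsf h\in\mathbb R^\Lambda$, the $\varphi^4$ partition function is $Z^{\varphi^4}_{\Lambda,\beta,\mathsf h}=\int \exp\big(\beta\sum_{xy\in E(\Lambda)}\varphi_x\varphi_y+\beta\sum_{x\in\Lambda}\mathsf h_x\varphi_x\big)\prod_{x\in\Lambda}\mathrm d\rho_{g,a}(\varphi_x)$. For $L,M\geq1$ let $\mathcal R(L,M)=\{-L,\dots,L\}^{d-1}\times\{-M,\dots,M\}$, its thick boundary $\partial^{\rm thick}\mathcal R(L,M)=\mathcal R(L,M)\setminus\big(\{-L+\log L+1,\dots,L-\log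 L-1\}^{d-1}\times\{-M,\dots,M\}\big)$, its top part $\partial^{\rm thick}_+=\partial^{\rm thick}\mathcal R(L,M)\cap\{x_d\in\{1,\dots,M\}\}$ and bottom part $\partial^{\rm thick}_-=\partial^{\rm thick}\mathcal R(L,M)\cap\{x_d\in\{-M,\dots,0\}\}$. Let $\mathsf h^{+,+}_{L,M}=\mathbbm 1_{\partial^{\rm thick}\mathcal R(L,M)}$ and $\mathsf h^{+,-}_{L,M}=\mathbbm 1_{\partial^{\rm thick}_+}-\mathbbm 1_{\partial^{\rm thick}_-}$, and $Z^{+,\pm}_{\mathcal R(L,M),\beta}:=Z^{\varphi^4}_{\mathcal R(L,M),\beta,\mathsf h^{+,\pm}_{L,M}}$. Let $\mathcal R^{+,-}(L,M)$ be the graph with vertices $\mathcal R(L,M)\cup\{\mathfrak g^+,\mathfrak g^-\}$ (two ghost vertices) and edges $E(\mathcal R(L,M))\cup\{x\mathfrak g^+:x\in\partial^{\rm thick}_+\}\cup\{x\mathfrak g^-:x\in\partial^{\rm thick}_-\}$. The free $\varphi^4$ random cluster measure $\Psi^{0}_{\mathcal R(L,M),\beta,\mathsf{h}^{+,+}_{L,M}}$ is the probability measure on pairs $(\omega,\mathsf a)\in\{0,1\}^{E(\mathcal R^{+,-}(L,M))}\times(\mathbb R^+)^{\mathcal R(L,M)}$ with density proportional to $\prod_{xy\in E(\mathcal R(L,M))}\sqrt{1-p_{xy}}\big(\tfrac{p_{xy}}{1-p_{xy}}\big)^{\omega_{xy}}\prod_{x\mathfrak g^{\pm}}\sqrt{1-p_{x\mathfrak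 g}}\big(\tfrac{p_{x\mathfrak g}}{1-p_{x\mathfrak g}}\big)^{\omega_{x\mathfrak g^\pm}}\,2^{\tilde k(\omega)}\prod_{x}\mathrm d\rho_{g,a}(\mathsf a_x)$, where $\mathrm d\rho_{g,a}(\mathsf a_x)$ here denotes the pushforward of $\rho_{g,a}$ under $t\mapsto|t|$, $p_{xy}=1-e^{-2\beta\mathsf a_x\mathsf a_y}$, $p_{x\mathfrak g}=1-e^{-2\beta\mathsf h^{+,+}_{L,M}(x)\mathsf a_x}$, and $\tilde k(\omega)$ is the number of connected components of $\omega$ after identifying $\mathfrak g^+$ and $\mathfrak g^-$. (After identifying the two ghosts this is the usual free $\varphi^4$ random cluster measure with field $\mathsf h^{+,+}_{L,M}$, i.e. an Ising random cluster model with couplings $\beta\mathsf a_x\mathsf a_y$ in the random environment $\mathsf a\sim|\varphi|$.) *)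

(* Defs.v *)
From HB Require Import structures.
From mathcomp Require Import all_boot all_order all_algebra.
From mathcomp Require Import all_classical all_reals all_analysis.
Set Implicit Arguments. Unset Strict Implicit. Unset Printing Implicit Defensive.
Import Order.TTheory GRing.Theory Num.Theory.
Local Open Scope ring_scope.

Section Phi4.
Variables (R : realType) (g a : R) (d : nat).

Definition rho_weight (t : R) : R := expR (- (g * t ^+ 4) - a * t ^+ 2).
Definition rho_norm : R :=
  fine (\int[@lebesgue_measure R]_(t in [set: R]) (rho_weight t)%:E)%E.
Definition rho_dens (t : R) : R := rho_weight t / rho_norm.

Variables (L M : nat).
Definition NN := maxn L M.
(* a point of Z^d, stored with coordinates shifted by NN; only the box R(L,M) is used *)
Definition V := {ffun 'I_d -> 'I_(NN.*2.+1)}.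
Definition coord (x : V) (i : 'I_d) : int := (x i : nat)%:Z - NN%:Z.
Definition is_last (i : 'I_d) : bool := (i : nat) == d.-1.

Definition box : {set V} :=
  [set x : V | [forall i : 'I_d,
     if is_last i then (- (M%:Z) <= coord x i <= M%:Z)%R
     else (- (L%:Z) <= coord x i <= L%:Z)%R]].

Definition inner_cyl : {set V} :=
  [set x in box | [forall i : 'I_d, is_last i ||
     ((- (L%:R) + ln (L%:R) + 1 <= (coord x i)%:~R :> R) &&
      ((coord x i)%:~R <= L%:R - ln (L%:R) - 1 :> R))]].
Definition thick : {set V} := box :\: inner_cyl.
Definition last_coord (x : V) : int :=
  \sum_(i : 'I_d | is_last i) coord x i.
Definition thickP : {set V} := [set x in thick | (1 <= last_coord x)%R].
Definition thickM : {set V} := [set x in thick | (last_coord x <= 0)%R].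

(* nearest-neighbour edges of the box, each unordered edge listed once *)
Definition adjZ (x y : V) : bool := (\sum_(i : 'I_d) `|coord x i - coord y i|)%N == 1%N.
Definition edges : {set V * V} :=
  [set e : V * V | [&& e.1 \in box, e.2 \in box, adjZ e.1 e.2 &
                   (enum_rank e.1 < enum_rank e.2)%N]].

Definition h_pp (x : V) : R := if x \in thick then 1 else 0.
Definition h_pm (x : V) : R :=
  (if x \in thickP then 1 else 0) - (if x \in thickM then 1 else 0).

Fixpoint iint (F : (V -> R) -> \bar R) (s : seq V) (phi : V -> R) : \bar R :=
  match s with
  | [::] => F phi
  | x :: s' => (\int[@lebesgue_measure R]_(t in [set: R])
                 ((rho_dens t)%:E * iint F s' (fun y => if y == x then t else phi y)))%E
  end.
Definition int_box (F : (V -> R) -> \bar R) : R := fine (iint F (enum box) (fun _ => 0)).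

Definition Zphi4 (beta : R) (h : V -> R) : R :=
  int_box (fun phi => (expR (beta * (\sum_(e in edges) phi e.1 * phi e.2)
                              + beta * (\sum_(x in box) h x * phi x)))%:E).

(* graph R^{+,-}(L,M) with the two ghosts identified: None is the ghost *)
Definition adj1 (wE : {set V * V}) (wG : {set V}) (u v : option V) : bool :=
  match u, v with
  | Some x, Some y => ((x, y) \in wE) || ((y, x) \in wE)
  | Some x, None | None, Some x => x \in wG
  | None, None => false
  end.
Definition verts1 : {set option V} := None |: [set Some x | x in box].
Definition ktilde (wE : {set V * V}) (wG : {set V}) : nat :=
  #|[set [set v in verts1 | connect (adj1 wE wG) u v] | u in verts1]|.

(* graph R^{+,-}(L,M) with two ghosts: inr true = g^+, inr false = g^- *)
Definition adj2 (wE : {set V * V}) (wG : {set V}) (u v : V + bool) : bool :=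
  match u, v with
  | inl x, inl y => ((x, y) \in wE) || ((y, x) \in wE)
  | inl x, inr b | inr b, inl x => (x \in wG) && (if b then x \in thickP else x \in thickM)
  | inr _, inr _ => false
  end.
Definition ghosts_disconnected (wE : {set V * V}) (wG : {set V}) : bool :=
  ~~ connect (adj2 wE wG) (inr false) (inr true).

Definition rc_weight (beta : R) (wE : {set V * V}) (wG : {set V}) (aa : V -> R) : R :=
  (\prod_(e in edges)
     (let p := 1 - expR (- (2 * beta * aa e.1 * aa e.2)) in
      Num.sqrt (1 - p) * (p / (1 - p)) ^+ (e \in wE))) *
  (\prod_(x in thick)
     (let p := 1 - expR (- (2 * beta * h_pp x * aa x)) in
      Num.sqrt (1 - p) * (p / (1 - p)) ^+ (x \in wG))) *
  2 ^+ ktilde wE wG.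

(* Psi^0_{R(L,M),beta,h_pp}[event]; a_x = |phi_x| realises the pushforward of rho under |.| *)
Definition Psi0 (beta : R) (P : {set V * V} -> {set V} -> bool) : R :=
  int_box (fun phi => (\sum_(wE : {set V * V} | wE \subset edges)
                       \sum_(wG : {set V} | (wG \subset thick) && P wE wG)
                         rc_weight beta wE wG (fun x => `|phi x|))%:E)
  / int_box (fun phi => (\sum_(wE : {set V * V} | wE \subset edges)
                       \sum_(wG : {set V} | wG \subset thick)
                         rc_weight beta wE wG (fun x => `|phi x|))%:E).

End Phi4.

Definition Zpp (R : realType) (g a : R) (d L M : nat) (beta : R) : R :=
  Zphi4 g a beta (@h_pp R d L M).
Definition Zpm (R : realType) (g a : R) (d L M : nat) (beta : R) : R :=
  Zphi4 g a beta (@h_pm R d L M).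

Definition surface_tension (R : realType) (g a : R) (d : nat) (beta : R) : \bar R :=
  limn_einf (fun L : nat =>
    limn_einf (fun M : nat =>
      ((ln (Zpp g a d L.+1 M.+1 beta / Zpm g a d L.+1 M.+1 beta)
        / ((L.+1)%:R ^+ d.-1))%:E))).

(* Main.v *)
Require Import Defs.
From HB Require Import structures.
From mathcomp Require Import all_boot all_order all_algebra.
From mathcomp Require Import all_classical all_reals all_analysis.
From mathcomp Require Import measurable_realfun.
From mathcomp Require Import ring lra.
Import Order.TTheory GRing.Theory Num.Theory.
Local Open Scope ring_scope.
Set Implicit Arguments. Unset Strict Implicit. Unset Printing Implicit Defensive.


Section PartA.
Variables (R : realType) (g a : R) (d L M : nat).
Local Notation VV := (V d L M).
Local Notation leb := (@lebesgue_measure R).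
Local Notation rho := (rho_dens g a).

Definition upd (phi : VV -> R) (x : VV) (t : R) : VV -> R :=
  fun y => if y == x then t else phi y.

Definition coordm dd (T : measurableType dd) (Phi : T -> VV -> R) :=
  forall v, measurable_fun setT (fun t => Phi t v).

Definition mgood (F : (VV -> R) -> \bar R) :=
  forall dd (T : measurableType dd) (Phi : T -> VV -> R),
    coordm Phi -> measurable_fun setT (fun t => F (Phi t)).

Definition mgoodR (f : (VV -> R) -> R) :=
  forall dd (T : measurableType dd) (Phi : T -> VV -> R),
    coordm Phi -> measurable_fun setT (fun t => f (Phi t)).

Definition nneg (F : (VV -> R) -> \bar R) := forall psi, (0 <= F psi)%E.

Lemma mgood_EFin f : mgoodR f -> mgood (fun psi => (f psi)%:E).
Proof. by move=> hf dd T Phi hP; apply/measurable_EFinP; exact: hf. Qed.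

Lemma rho_ge0 t : 0 <= rho t.
Proof.
rewrite /rho_dens divr_ge0 ?expR_ge0 // /rho_norm fine_ge0 //.
by apply: integral_ge0 => x _; rewrite lee_fin expR_ge0.
Qed.

Lemma rho_meas : measurable_fun setT rho.
Proof.
rewrite /rho_dens /rho_weight.
apply: measurable_funM; last exact: measurable_cst.
apply: measurableT_comp; first exact: measurable_expR.
apply: measurable_funB.
  apply: measurableT_comp; first exact: oppr_measurable.
  apply: measurable_funM; first exact: measurable_cst.
  exact: exprn_measurable.
apply: measurable_funM; first exact: measurable_cst.
exact: exprn_measurable.
Qed.

Lemma rho_even t : rho (- t) = rho t.
Proof.
rewrite /rho_dens /rho_weight.
have -> : (- t) ^+ 4 = t ^+ 4 by ring.
by have -> : (- t) ^+ 2 = t ^+ 2 by ring.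
Qed.

Lemma iint_ge0 F s phi : nneg F -> (0 <= iint g a F s phi)%E.
Proof.
move=> F0; elim: s phi => [|x s IH] phi /=; first exact: F0.
apply: integral_ge0 => t _; apply: mule_ge0; first by rewrite lee_fin rho_ge0.
exact: IH.
Qed.

Lemma iint_mgood F s : mgood F -> nneg F -> mgood (fun phi => iint g a F s phi).
Proof.
move=> mF F0; elim: s => [|x s IH] dd T Phi hP /=; first exact: mF.
pose f := fun p : T * R => ((rho p.2)%:E * iint g a F s (upd (Phi p.1) x p.2))%E.
have mf : measurable_fun setT f.
  apply: emeasurable_funM.
    apply/measurable_EFinP; apply: measurableT_comp; first exact: rho_meas.
    exact: measurable_snd.
  apply: (IH _ _ (fun p : T * R => upd (Phi p.1) x p.2)) => v.
  rewrite /upd; case: (v == x); first exact: measurable_snd.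
  exact: (measurableT_comp (hP v) measurable_fst).
have f0 : forall p, (0 <= f p)%E.
  by move=> p; apply: mule_ge0; [rewrite lee_fin rho_ge0| exact: iint_ge0].
exact: (@measurable_fun_fubini_tonelli_F _ _ _ _ _ leb f mf f0).
Qed.

Lemma iint_mgood_upd F s phi x : mgood F -> nneg F ->
  measurable_fun setT (fun t => iint g a F s (upd phi x t)).
Proof.
move=> mF F0; apply: (@iint_mgood F s mF F0 _ _ (fun t : R => upd phi x t)) => v.
rewrite /upd; case: (v == x); first exact: measurable_id.
exact: measurable_cst.
Qed.

Lemma integral_refl (G : R -> \bar R) : measurable_fun setT G ->
  (forall t, (0 <= G t)%E) ->
  (\int[leb]_(t in setT) ((rho t)%:E * G (- t)%R) =
   \int[leb]_(t in setT) ((rho t)%:E * G t))%E.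
Proof.
move=> mG G0.
pose H := fun t => ((rho t)%:E * G t)%E.
have mH : measurable_fun setT H.
  apply: emeasurable_funM => //; apply/measurable_EFinP; exact: rho_meas.
have H0 : forall t, (0 <= H t)%E.
  by move=> t; apply: mule_ge0 => //; rewrite lee_fin rho_ge0.
transitivity (\int[leb]_(t in setT) (H \o (-%R)) t)%E.
  by apply: eq_integral => t _; rewrite /H /= rho_even.
transitivity (\int[leb]_(t in ((-%R : _ -> measurableTypeR R) @^-1` setT)%classic) (H \o -%R) t)%E.
  by rewrite preimage_setT.
rewrite -ge0_integral_pushforward//=.
apply: eq_measure_integral => //= A mA _.
exact: lebesgue_measureN.
Qed.

Definition flip (S : {set VV}) (psi : VV -> R) : VV -> R :=
  fun v => if v \in S then - psi v else psi v.

Lemma iint_flip F s S phi : mgood F -> nneg F ->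
  iint g a (fun psi => F (flip S psi)) s phi = iint g a F s (flip S phi).
Proof.
move=> mF F0; elim: s phi => [|x s IH] phi //=.
transitivity (\int[leb]_(t in setT)
   ((rho t)%:E * iint g a F s (upd (flip S phi) x (if x \in S then (- t)%R else t))))%E.
  apply: eq_integral => t _; rewrite IH; congr (_ * iint _ _ _ _ _)%E.
  apply/funext => y; rewrite /flip /upd; case: eqP => [->|//].
  by case: (x \in S).
case: (x \in S); last by [].
apply: (integral_refl (G := fun t => iint g a F s (upd (flip S phi) x t))).
  exact: iint_mgood_upd.
by move=> t; apply: iint_ge0.
Qed.

Lemma iint_add F1 F2 s phi : mgood F1 -> mgood F2 -> nneg F1 -> nneg F2 ->
  iint g a (fun psi => F1 psi + F2 psi)%E s phi =
  (iint g a F1 s phi + iint g a F2 s phi)%E.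
Proof.
move=> m1 m2 p1 p2; elim: s phi => [|x s IH] phi //=.
under eq_integral do rewrite IH ge0_muleDr ?iint_ge0//.
apply: ge0_integralD => //.
- by move=> t _; apply: mule_ge0; [rewrite lee_fin rho_ge0|exact: iint_ge0].
- apply: emeasurable_funM; first by apply/measurable_EFinP; exact: rho_meas.
  exact: iint_mgood_upd.
- by move=> t _; apply: mule_ge0; [rewrite lee_fin rho_ge0|exact: iint_ge0].
- apply: emeasurable_funM; first by apply/measurable_EFinP; exact: rho_meas.
  exact: iint_mgood_upd.
Qed.

Lemma iint_scale F (c : R) s phi : 0 <= c -> mgood F -> nneg F ->
  iint g a (fun psi => c%:E * F psi)%E s phi = (c%:E * iint g a F s phi)%E.
Proof.
move=> c0 mF F0; elim: s phi => [|x s IH] phi //=.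
under eq_integral do rewrite IH muleCA.
apply: ge0_integralZl => //.
- apply: emeasurable_funM; first by apply/measurable_EFinP; exact: rho_meas.
  exact: iint_mgood_upd.
- by move=> t _; apply: mule_ge0; [rewrite lee_fin rho_ge0|exact: iint_ge0].
Qed.

Lemma iint_le F1 F2 s phi : mgood F1 -> mgood F2 -> nneg F1 ->
  (forall psi, F1 psi <= F2 psi)%E ->
  (iint g a F1 s phi <= iint g a F2 s phi)%E.
Proof.
move=> m1 m2 p1 le12; elim: s phi => [|x s IH] phi //=.
have p2 : nneg F2 by move=> psi; apply: le_trans (le12 psi).
apply: ge0_le_integral => //.
- by move=> t _; apply: mule_ge0; [rewrite lee_fin rho_ge0|exact: iint_ge0].
- apply: emeasurable_funM; first by apply/measurable_EFinP; exact: rho_meas.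
  exact: iint_mgood_upd.
- apply: emeasurable_funM; first by apply/measurable_EFinP; exact: rho_meas.
  exact: iint_mgood_upd.
- by move=> t _; apply: lee_wpmul2l; [rewrite lee_fin rho_ge0|exact: IH].
Qed.

Lemma iint0 s phi : iint g a (fun _ : VV -> R => 0%E) s phi = 0%E.
Proof.
elim: s phi => [|x s IH] phi //=.
under eq_integral do rewrite IH mule0.
exact: integral0.
Qed.

Lemma mgoodR_sum (I : Type) (r : seq I) (f : I -> (VV -> R) -> R) :
  (forall i, mgoodR (f i)) -> mgoodR (fun psi => \sum_(i <- r) f i psi).
Proof.
move=> mf dd T Phi hP.
elim: r => [|i r IH].
  under eq_fun do rewrite big_nil; exact: measurable_cst.
under eq_fun do rewrite big_cons.
by apply: measurable_funD => //; exact: mf.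
Qed.

Lemma iint_sum (I : Type) (r : seq I) (f : I -> (VV -> R) -> R) s phi :
  (forall i, mgoodR (f i)) -> (forall i psi, 0 <= f i psi) ->
  iint g a (fun psi => (\sum_(i <- r) f i psi)%:E) s phi =
  (\sum_(i <- r) iint g a (fun psi => (f i psi)%:E) s phi)%E.
Proof.
move=> mf f0; elim: r => [|i r IH].
  rewrite big_nil -(iint0 s phi); congr iint; apply/funext => psi.
  by rewrite big_nil.
rewrite big_cons -IH -iint_add.
- by congr iint; apply/funext => psi; rewrite big_cons EFinD.
- exact: mgood_EFin.
- exact/mgood_EFin/mgoodR_sum.
- by move=> psi; rewrite lee_fin.
- by move=> psi; rewrite lee_fin sumr_ge0.
Qed.

End PartA.

Lemma prod_sum_sub (R : comRingType) (I : finType) (A : {set I}) (F G : I -> R) :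
  \prod_(i in A) (G i + F i) =
  \sum_(W : {set I} | W \subset A) \prod_(i in A) (if i \in W then F i else G i).
Proof.
pose F' i := if i \in A then F i else 0.
pose G' i := if i \in A then G i else 1.
have -> : \prod_(i in A) (G i + F i) = \prod_i (F' i + G' i).
  rewrite big_mkcond /=; apply: eq_bigr => i _; rewrite /F' /G'.
  by case: (i \in A); rewrite ?add0r // addrC.
rewrite bigA_distr (bigID (fun W : {set I} => W \subset A)) /=.
rewrite [X in _ + X]big1 ?addr0; last first.
  move=> W /subsetPn [i iW niA]; rewrite (bigD1 i) //= iW /F' (negbTE niA).
  by rewrite mul0r.
apply: eq_big => [W //|W WA].
rewrite [RHS]big_mkcond /=; apply: eq_bigr => i _; rewrite /F' /G'.
case: (boolP (i \in A)) => iA //.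
by rewrite (negbTE (contra (fintype.subsetP WA i) iA)).
Qed.

Lemma prod_bool (R : comRingType) (I : finType) (A : {pred I}) (P : pred I) :
  \prod_(i in A) ((P i)%:R : R) = ([forall i in A, P i])%:R.
Proof.
case E: [forall i in A, P i].
  by apply: big1 => i iA; move/forall_inP: E => /(_ i iA) ->.
move/negbT: E; rewrite negb_forall_in => /exists_inP [i iA nP].
by rewrite (bigD1 i) //= (negbTE nP) mul0r.
Qed.
Section Alg.
Variable R : realType.
Definition sgn (b : bool) : R := if b then 1 else -1.
Definition wfac (p : R) (b : bool) : R := Num.sqrt (1 - p) * (p / (1 - p)) ^+ b.

Lemma fac (J : R) (b : bool) :
  expR (J * sgn b) = wfac (1 - expR (- (2 * J))) false +
                     wfac (1 - expR (- (2 * J))) true * (b%:R).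
Proof.
rewrite /wfac /= expr0 mulr1 expr1.
set q := expR (- J).
have e2 : expR (- (2 * J)) = q ^+ 2.
  by rewrite /q expr2 -expRD; congr expR; ring.
have e1 : 1 - (1 - expR (- (2 * J))) = q ^+ 2 by rewrite e2; ring.
rewrite e1 sqrtr_sqr ger0_norm ?expR_ge0 // e2.
have q0 : q != 0 by rewrite gt_eqF // expR_gt0.
case: b => /=; last by rewrite /sgn mulr0 addr0 mulrN1.
rewrite /sgn mulr1.
have -> : expR J = q^-1 by rewrite /q expRN invrK.
by field.
Qed.
End Alg.

Lemma connect_lab (T : finType) (e : rel T) (lab : T -> bool) :
  (forall u v, e u v -> lab u = lab v) -> forall u v, connect e u v -> lab u = lab v.
Proof.
move=> h u v /connectP [p pth ->]; elim: p u pth => [|w p IH] u //=.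
by move=> /andP [euw pw]; rewrite (h _ _ euw); exact: IH.
Qed.

Section Count.
Variables (T : finType) (e : rel T).
Hypothesis esym : symmetric e.
Variable D : {set T}.
Hypothesis eD : forall u v, e u v -> u \in D.

Let eD' u v : e u v -> v \in D.
Proof. by rewrite esym; exact: eD. Qed.

Definition cls u := [set v in D | connect e u v].
Definition clss := [set cls u | u in D].
Definition closedb (f : {set T}) := [forall u, forall v, e u v ==> ((u \in f) == (v \in f))].

Let csym : connect_sym e := sym_connect_sym esym.

Lemma cls_self u : u \in D -> u \in cls u.
Proof. by move=> uD; rewrite inE uD connect0. Qed.

Lemma clsE u v : v \in cls u -> cls v = cls u.
Proof.
rewrite inE => /andP [_ cuv]; apply/finset.setP => w; rewrite !inE.
case: (w \in D) => //=; apply/idP/idP => [cvw|cuw].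
  exact: connect_trans cuv cvw.
by rewrite csym in cuv; exact: connect_trans cuv cuw.
Qed.

Lemma closedbP f : closedb f -> forall u v, connect e u v -> (u \in f) = (v \in f).
Proof.
move=> /forallP cf; apply: connect_lab => u v euv.
by have /forallP /(_ v) := cf u; rewrite euv /= => /eqP.
Qed.

Lemma cover_sub (Q1 Q2 : {set {set T}}) : Q1 \subset clss -> Q2 \subset clss ->
  finset.cover Q1 \subset finset.cover Q2 -> Q1 \subset Q2.
Proof.
move=> /fintype.subsetP s1 /fintype.subsetP s2 /fintype.subsetP c12; apply/fintype.subsetP => C CQ1.
have /imsetP [u uD CE] := s1 C CQ1.
have : u \in finset.cover Q1 by apply/finset.bigcupP; exists C => //; rewrite CE cls_self.
move/c12 => /finset.bigcupP [C' C'Q2 uC'].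
have /imsetP [u' u'D C'E] := s2 C' C'Q2.
have uc : u \in cls u' by rewrite -C'E.
by rewrite CE (clsE uc) -C'E.
Qed.

Lemma count_closed :
  (#|[set f : {set T} | (f \subset D) && closedb f]| = 2 ^ #|clss|)%N.
Proof.
rewrite -card_powerset.
have -> : [set f : {set T} | (f \subset D) && closedb f] =
          [set finset.cover Q | Q in powerset clss].
  apply/finset.setP => f; rewrite inE; apply/idP/imsetP.
    move=> /andP [fD cf]; exists [set C in clss | C \subset f].
      by rewrite powersetE; apply/fintype.subsetP => C; rewrite inE => /andP [].
    apply/finset.setP => w; apply/idP/finset.bigcupP.
      move=> wf; have wD : w \in D by apply: (fintype.subsetP fD).
      exists (cls w); last exact: cls_self.
      rewrite inE; apply/andP; split; first by apply/imsetP; exists w.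
      apply/fintype.subsetP => v; rewrite inE => /andP [_ cwv].
      by rewrite -(closedbP cf cwv).
    by move=> [C]; rewrite inE => /andP [_ /fintype.subsetP]; apply.
  move=> [Q]; rewrite powersetE => /fintype.subsetP QP ->.
  apply/andP; split.
    apply/fintype.subsetP => w /finset.bigcupP [C /QP /imsetP [u _ ->]].
    by rewrite inE => /andP [].
  have step : forall u v, e u v -> u \in finset.cover Q -> v \in finset.cover Q.
    move=> u v euv /finset.bigcupP [C CQ uC]; apply/finset.bigcupP; exists C => //.
    have /imsetP [w _ CE] := QP C CQ.
    move: uC; rewrite CE !inE => /andP [_ cwu].
    by rewrite (eD' euv) /=; apply: connect_trans cwu (connect1 euv).
  apply/forallP => u; apply/forallP => v; apply/implyP => euv.
  apply/eqP; apply/idP/idP; first exact: (step u v euv).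
  by apply: (step v u); rewrite esym.
apply: card_in_imset => Q1 Q2; rewrite !powersetE => s1 s2 c12.
by apply/eqP; rewrite finset.eqEsubset; apply/andP; split; apply: cover_sub => //; rewrite c12 subxx.
Qed.

Lemma closedD f : closedb f -> closedb (D :\: f).
Proof.
move=> /forallP cf; apply/forallP => u; apply/forallP => v; apply/implyP => euv.
have /forallP /(_ v) := cf u; rewrite euv /= => /eqP fuv.
by rewrite !inE fuv (eD euv) (eD' euv).
Qed.

Lemma count_half r : r \in D ->
  (2 * #|[set f : {set T} | [&& f \subset D, closedb f & r \notin f]]| =
   #|[set f : {set T} | (f \subset D) && closedb f]|)%N.
Proof.
move=> rD.
set A := [set f : {set T} | (f \subset D) && closedb f].
rewrite -(cardsID [set f : {set T} | r \in f] A).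
have E1 : A :\: [set f : {set T} | r \in f] =
          [set f : {set T} | [&& f \subset D, closedb f & r \notin f]].
  by apply/finset.setP => f; rewrite !inE andbC andbA.
have E2 : A :&: [set f : {set T} | r \in f] =
          [set D :\: f | f in A :\: [set f : {set T} | r \in f]].
  apply/finset.setP => f; rewrite !inE; apply/idP/imsetP.
    move=> /andP [/andP [fD cf] rf]; exists (D :\: f).
      by rewrite !inE finset.subsetDl closedD //= rf.
    apply/finset.setP => w; rewrite !inE; have := fintype.subsetP fD w.
    by case: (w \in f); case: (w \in D) => //= h; have := h isT.
  move=> [f0]; rewrite !inE => /andP [rf0 /andP [f0D cf0]] ->.
  by rewrite finset.subsetDl closedD //= !inE rf0 rD.
rewrite E2 card_in_imset ?E1 ?mul2n ?addnn //.
move=> f1 f2; rewrite !inE => /and3P [s1 _ _] /and3P [s2 _ _] h.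
apply/finset.setP => w; have := congr1 (fun X : {set T} => w \in X) h; rewrite /= !inE.
case: (boolP (w \in D)) => wD /=; rewrite ?andbT ?andbF; first by move=> /negb_inj.
by rewrite (negbTE (contra (fintype.subsetP s1 w) wD)) (negbTE (contra (fintype.subsetP s2 w) wD)).
Qed.

End Count.

Section Graph.
Variables (R : realType) (d L M : nat).
Local Notation VV := (V d L M).
Local Notation thk := (thick R d L M).
Local Notation thP := (thickP R d L M).
Local Notation thM := (thickM R d L M).
Local Notation bx := (box d L M).
Local Notation eds := (edges d L M).

Definition agE (S : {set VV}) (e : VV * VV) : bool := (e.1 \in S) == (e.2 \in S).
Definition okpp (S : {set VV}) (x : VV) : bool := x \notin S.
Definition okpm (S : {set VV}) (x : VV) : bool := (x \in thP) == (x \notin S).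
Definition cE (S : {set VV}) (W : {set VV * VV}) :=
  [forall e in eds, (e \in W) ==> agE S e].
Definition cG (ok : {set VV} -> VV -> bool) (S : {set VV}) (U : {set VV}) :=
  [forall x in thk, (x \in U) ==> ok S x].
Definition cnt ok W U :=
  #|[set S : {set VV} | [&& S \subset bx, cE S W & cG ok S U]]|.

Lemma thick_box : thk \subset bx.
Proof. by rewrite /thick finset.subsetDl. Qed.

Lemma edges_box e : e \in eds -> (e.1 \in bx) && (e.2 \in bx).
Proof. by rewrite inE => /and4P [-> -> _ _]. Qed.

Lemma thickPM x : x \in thk -> (x \in thM) = ~~ (x \in thP).
Proof.
move=> xt; have E : forall (A : {set VV}) (P : pred VV), (x \in [set y in A | P y]) = (x \in A) && P x.
  by move=> A P; rewrite finset.in_set.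
by rewrite /thickM /thickP !E xt /= leNgt gtz0_ge1.
Qed.

Lemma noneS (S : {set VV}) : None \notin [set Some x | x in S].
Proof. by apply/imsetP => [[y _]]. Qed.

Lemma cnt_pp (W : {set VV * VV}) (U : {set VV}) : W \subset eds -> U \subset thk ->
  (2 * cnt okpp W U = 2 ^ ktilde W U)%N.
Proof.
move=> WE UT.
have esym : symmetric (Defs.adj1 W U).
  by move=> [x|] [y|] //=; rewrite orbC.
have Sbx : forall x, (Some x \in verts1 d L M) = (x \in bx).
  by move=> x; rewrite /verts1 in_setU1 /= mem_imset //; exact: Some_inj.
have eD : forall u v, Defs.adj1 W U u v -> u \in verts1 d L M.
  move=> [x|] [y|] //= H; rewrite ?Sbx ?finset.setU11 //.
    case/orP: H => /(fintype.subsetP WE) /edges_box /andP [] //.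
  exact: (fintype.subsetP thick_box) (fintype.subsetP UT x H).

have nV : None \in verts1 d L M by rewrite /verts1 finset.setU11.
have := count_half esym eD nV.
rewrite (count_closed esym eD) => <-; congr (2 * _)%N.
rewrite /cnt -(card_imset _ (imset_inj (f:=@Some VV) Some_inj)); apply: eq_card => f.
rewrite [in RHS]inE; apply/imsetP/and3P.
  move=> [S]; rewrite inE => /and3P [Sb cES cGS] ->; split.
  - apply/fintype.subsetP => _ /imsetP [x xS ->]; rewrite Sbx; exact: (fintype.subsetP Sb).
  - apply/forallP => u; apply/forallP => v; apply/implyP.
    case: u => [x|]; case: v => [y|] //= H.
    + rewrite !mem_imset //; try exact: Some_inj.
      case/orP: H => H; have := forall_inP cES _ (fintype.subsetP WE _ H); rewrite H /agE //=.
      by rewrite eq_sym.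
    + rewrite mem_imset; last exact: Some_inj.
      rewrite (negbTE (noneS S)).
      have := forall_inP cGS _ (fintype.subsetP UT _ H); rewrite H /okpp /=.
      by move/negbTE ->.
    + rewrite mem_imset; last exact: Some_inj.
      rewrite (negbTE (noneS S)).
      have := forall_inP cGS _ (fintype.subsetP UT _ H); rewrite H /okpp /=.
      by move/negbTE ->.
  - exact: noneS.
move=> [fV cf nf]; exists [set x | Some x \in f].
  rewrite inE; apply/and3P; split.
  - apply/fintype.subsetP => x; rewrite inE => /(fintype.subsetP fV); by rewrite Sbx.
  - apply/forall_inP => e eE; apply/implyP => eW.
    have /forallP /(_ (Some e.2)) := forallP cf (Some e.1).
    by case: e eE eW => e1 e2 eE eW /=; rewrite eW /agE /= !inE.
  - apply/forall_inP => x xT; apply/implyP => xU.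
    have /forallP /(_ None) := forallP cf (Some x).
    by rewrite /= xU (negbTE nf) /okpp inE /= => /eqP ->.
apply/finset.setP => [[x|]]; first by rewrite mem_imset ?inE //; exact: Some_inj.
by rewrite (negbTE nf) (negbTE (noneS _)).
Qed.

Lemma adj2_sym (W : {set VV * VV}) (U : {set VV}) : symmetric (adj2 R W U).
Proof. by move=> [x|b] [y|c] //=; rewrite orbC. Qed.

Lemma cnt_pm (W : {set VV * VV}) (U : {set VV}) : W \subset eds -> U \subset thk ->
  cnt okpm W U = if ghosts_disconnected R W U then cnt okpp W U else 0%N.
Proof.
move=> WE UT.
have csym := sym_connect_sym (adj2_sym W U).
case: ifP => disc; last first.
  move/negbFE: disc => conn.
  apply/eqP; rewrite cards_eq0; apply/eqP/finset.setP => S; rewrite !inE.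
  apply/negbTE/negP => /and3P [Sb cES cGS].
  pose lab := fun u : VV + bool => match u with inl x => x \in S | inr b => ~~ b end.
  suff : lab (inr false) = lab (inr true) by [].
  apply: (connect_lab (e := adj2 R W U)) conn => u v.
  have key : forall x b, adj2 R W U (inl x) (inr b) -> (x \in S) = ~~ b.
    move=> x b /= /andP [xU xb].
    have xT := fintype.subsetP UT _ xU.
    have := forall_inP cGS _ xT; rewrite xU /okpm /= => /eqP.
    case: b xb => [-> |xM]; first by case: (x \in S).
    by rewrite -(negbK (x \in thP)) -thickPM // xM; case: (x \in S).
  case: u => [x|b]; case: v => [y|c] // H.
  - have ag : forall e, e \in W -> agE S e.
      by move=> e eW; have := forall_inP cES _ (fintype.subsetP WE _ eW); rewrite eW.
    case/orP: H => H; have := ag _ H; rewrite /agE /= => /eqP //.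
  - exact: key.
  - by rewrite /= (key y b) // adj2_sym.
pose C := [set x in bx | connect (adj2 R W U) (inr false) (inl x)].
pose sd (S : {set VV}) := (S :\: C) :|: (C :\: S).
have in_sd : forall S x, (x \in sd S) = (x \in S) (+) (x \in C).
  by move=> S x; rewrite /sd finset.in_setU !finset.in_setD; case: (x \in S); case: (x \in C).
have inC : forall x, (x \in C) = (x \in bx) && connect (adj2 R W U) (inr false) (inl x).
  by move=> x; rewrite /C finset.in_set.
have sdK : involutive sd.
  by move=> S; apply/finset.setP => x; rewrite !in_sd addbK.
have CE : forall e, e \in W -> (e.1 \in C) = (e.2 \in C).
  move=> e eW; have /andP [b1 b2] := edges_box (fintype.subsetP WE _ eW).
  have a12 : adj2 R W U (inl e.1) (inl e.2) by rewrite /= -surjective_pairing eW.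
  rewrite !inC b1 b2 /=; apply/idP/idP => h.
    exact: connect_trans h (connect1 a12).
  by apply: connect_trans h (connect1 _); rewrite adj2_sym.
have CP : forall x, x \in U -> x \in thP -> x \notin C.
  move=> x xU xP; apply/negP; rewrite inC => /andP [_ h].
  move/negP: disc; apply; apply: connect_trans h (connect1 _).
  by rewrite /= xU xP.
have CM : forall x, x \in U -> x \notin thP -> x \in C.
  move=> x xU xP; have xT := fintype.subsetP UT _ xU.
  rewrite inC (fintype.subsetP thick_box _ xT) /=; apply: connect1.
  by rewrite /= xU thickPM // xP.
have Cb : C \subset bx by apply/fintype.subsetP => x; rewrite inC => /andP [].
have key : forall S : {set VV}, [&& S \subset bx, cE S W & cG okpm S U] =
                     [&& sd S \subset bx, cE (sd S) W & cG okpp (sd S) U].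
  move=> S; congr [&& _, _ & _].
  - apply/idP/idP => /fintype.subsetP h; apply/fintype.subsetP => x.
      by rewrite in_sd; case: (x \in C) (fintype.subsetP Cb x); case: (x \in S) (h x) => //= ->.
    case: (boolP (x \in C)) => [/(fintype.subsetP Cb) //|nC xS].
    by apply: h; rewrite in_sd xS (negbTE nC).
  - apply: eq_forallb_in => e eE; case: (boolP (e \in W)) => //= eW.
    by rewrite /agE !in_sd (CE e eW); case: (e.1 \in S); case: (e.2 \in S); case: (e.2 \in C).
  - apply: eq_forallb_in => x xT; case: (boolP (x \in U)) => //= xU.
    rewrite /okpm /okpp in_sd; case: (boolP (x \in thP)) => xP.
      by rewrite (negbTE (CP x xU xP)) addbF; case: (x \in S).
    by rewrite (CM x xU xP) addbT; case: (x \in S).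
rewrite /cnt -(card_imset _ (can_inj sdK)); apply: eq_card => S.
rewrite [in RHS]inE; apply/imsetP/idP.
  by move=> [S0]; rewrite inE key => + ->.
by move=> h; exists (sd S); rewrite ?inE ?key ?sdK.
Qed.

End Graph.


Section ES.
Variables (R : realType) (d L M : nat) (beta : R).
Local Notation VV := (V d L M).
Local Notation thk := (thick R d L M).
Local Notation thP := (thickP R d L M).
Local Notation thM := (thickM R d L M).
Local Notation bx := (box d L M).
Local Notation eds := (edges d L M).

Definition Eh (h : VV -> R) (psi : VV -> R) : R :=
  expR (beta * (\sum_(e in eds) psi e.1 * psi e.2) + beta * (\sum_(x in bx) h x * psi x)).

Lemma Eh_prod (h : VV -> R) (hz : forall x, x \notin thk -> h x = 0) (a : VV -> R) (S : {set VV}) :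
  Eh h (flip S a) =
  (\prod_(e in eds) expR ((beta * a e.1 * a e.2) * sgn R (agE S e))) *
  (\prod_(x in thk) expR ((beta * a x) * (h x * sgn R (x \notin S)))).
Proof.
rewrite /Eh expRD; congr (_ * _).
  rewrite mulr_sumr expR_sum; apply: eq_bigr => e _; congr expR.
  by rewrite /flip /agE /sgn; case: (e.1 \in S); case: (e.2 \in S) => /=; ring.
rewrite mulr_sumr (big_setID thk) /= (finset.setIidPr (thick_box R d L M)) [X in _ + X]big1 ?addr0.
  rewrite expR_sum; apply: eq_bigr => x _; congr expR.
  by rewrite /flip /sgn; case: (x \in S) => /=; ring.
by move=> x; rewrite finset.in_setD => /andP [xnT _]; rewrite hz // mul0r mulr0.
Qed.

Definition pe (a : VV -> R) (e : VV * VV) := 1 - expR (- (2 * beta * a e.1 * a e.2)).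
Definition pg (a : VV -> R) (x : VV) := 1 - expR (- (2 * beta * h_pp R x * a x)).
Definition wEd a (W : {set VV * VV}) := \prod_(e in eds) wfac (pe a e) (e \in W).
Definition wGh a (U : {set VV}) := \prod_(x in thk) wfac (pg a x) (x \in U).

Lemma rc_eq W U a : rc_weight beta W U a = wEd a W * wGh a U * 2 ^+ ktilde W U.
Proof. by []. Qed.

Lemma expand (I : finType) (A : {set I}) (p : I -> R) (b : I -> bool) :
  \prod_(i in A) (wfac (p i) false + wfac (p i) true * (b i)%:R) =
  \sum_(W : {set I} | W \subset A)
     (\prod_(i in A) wfac (p i) (i \in W)) * ([forall i in A, (i \in W) ==> b i])%:R.
Proof.
rewrite prod_sum_sub; apply: eq_bigr => W _.
rewrite -prod_bool -big_split /=; apply: eq_bigr => i _.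
by case: (i \in W) => //=; rewrite mulr1.
Qed.

Lemma ES_S (h : VV -> R) (hz : forall x, x \notin thk -> h x = 0)
  (ok : {set VV} -> VV -> bool) (a : VV -> R) (S : {set VV})
  (hg : forall x, x \in thk -> h x * sgn R (x \notin S) = sgn R (ok S x)) :
  Eh h (flip S a) =
  \sum_(W : {set VV * VV} | W \subset eds) \sum_(U : {set VV} | U \subset thk)
     wEd a W * wGh a U * ((cE S W && cG R ok S U))%:R.
Proof.
rewrite Eh_prod //.
have -> : \prod_(e in eds) expR ((beta * a e.1 * a e.2) * sgn R (agE S e)) =
          \prod_(e in eds) (wfac (pe a e) false + wfac (pe a e) true * (agE S e)%:R).
  apply: eq_bigr => e _; rewrite fac /pe; congr (wfac (1 - expR (- _)) _ + _).
    by rewrite !mulrA.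
  by rewrite !mulrA.
have -> : \prod_(x in thk) expR ((beta * a x) * (h x * sgn R (x \notin S))) =
          \prod_(x in thk) (wfac (pg a x) false + wfac (pg a x) true * (ok S x)%:R).
  apply: eq_bigr => x xT; rewrite hg // fac /pg /h_pp xT mulr1.
  by congr (wfac (1 - expR (- _)) _ + _); rewrite !mulrA.
rewrite !expand big_distrl; apply: eq_bigr => W _.
rewrite big_distrr; apply: eq_bigr => U _ /=.
by rewrite /wEd /wGh -mulnb natrM; ring.
Qed.

Lemma ES_sum (h : VV -> R) (hz : forall x, x \notin thk -> h x = 0)
  (ok : {set VV} -> VV -> bool) (a : VV -> R)
  (hg : forall (S : {set VV}) x, x \in thk -> h x * sgn R (x \notin S) = sgn R (ok S x)) :
  \sum_(S : {set VV} | S \subset bx) Eh h (flip S a) =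
  \sum_(W : {set VV * VV} | W \subset eds) \sum_(U : {set VV} | U \subset thk)
     wEd a W * wGh a U * (cnt R ok W U)%:R.
Proof.
under eq_bigr => S _ do rewrite (ES_S hz a (hg S)).
rewrite exchange_big; apply: eq_bigr => W _.
rewrite exchange_big; apply: eq_bigr => U _.
rewrite -mulr_sumr -natr_sum; congr (_ * _%:R).
rewrite /cnt -sum1dep_card big_mkcondr /=; apply: eq_bigr => S _.
by case: (cE S W && cG R ok S U).
Qed.

Lemma ES_pp (a : VV -> R) :
  2 * \sum_(S : {set VV} | S \subset bx) Eh (@h_pp R d L M) (flip S a) =
  \sum_(W : {set VV * VV} | W \subset eds) \sum_(U : {set VV} | U \subset thk)
     rc_weight beta W U a.
Proof.
have hz : forall x, x \notin thk -> @h_pp R d L M x = 0.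
  by move=> x xT; rewrite /h_pp (negbTE xT).
have hg : forall (S : {set VV}) x, x \in thk ->
    @h_pp R d L M x * sgn R (x \notin S) = sgn R (okpp S x).
  by move=> S x xT; rewrite /h_pp xT mul1r.
rewrite (ES_sum hz a hg) mulr_sumr; apply: eq_bigr => W WE.
rewrite mulr_sumr; apply: eq_bigr => U UT.
rewrite rc_eq -natrX -(cnt_pp WE UT) natrM; ring.
Qed.

Lemma ES_pm (a : VV -> R) :
  2 * \sum_(S : {set VV} | S \subset bx) Eh (@h_pm R d L M) (flip S a) =
  \sum_(W : {set VV * VV} | W \subset eds)
    \sum_(U : {set VV} | (U \subset thk) && ghosts_disconnected R W U)
     rc_weight beta W U a.
Proof.
have hz : forall x, x \notin thk -> @h_pm R d L M x = 0.
  move=> x xT; rewrite /h_pm.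
  have hP : x \in thP -> x \in thk by rewrite /thickP finset.in_set => /andP [].
  have hM : x \in thM -> x \in thk by rewrite /thickM finset.in_set => /andP [].
  by rewrite (negbTE (contra hP xT)) (negbTE (contra hM xT)) subr0.
have hg : forall (S : {set VV}) x, x \in thk ->
    @h_pm R d L M x * sgn R (x \notin S) = sgn R (okpm R S x).
  move=> S x xT; rewrite /h_pm /okpm (thickPM xT).
  by case: (x \in thP); case: (x \in S); rewrite /sgn /=; ring.
rewrite (ES_sum hz a hg) mulr_sumr; apply: eq_bigr => W WE.
rewrite mulr_sumr big_mkcondr /=; apply: eq_bigr => U UT.
rewrite (cnt_pm WE UT); case: ifP => _; last by rewrite mulr0 mulr0.
rewrite rc_eq -natrX -(cnt_pp WE UT) natrM; ring.
Qed.

End ES.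


Section Final.
Variables (R : realType) (g a : R) (d L M : nat) (beta : R).
Local Notation VV := (V d L M).
Local Notation thk := (thick R d L M).
Local Notation bx := (box d L M).
Local Notation eds := (edges d L M).
Local Notation mgoodR := (@mgoodR R d L M).
Local Notation mgood := (@mgood R d L M).

Lemma mgoodR_ext (f1 f2 : (VV -> R) -> R) : f1 =1 f2 -> mgoodR f1 -> mgoodR f2.
Proof. by move=> e; have -> : f1 = f2 by apply/funext. Qed.

Lemma mgR_coord v : mgoodR (fun psi => psi v).
Proof. by move=> dd T Phi hP; exact: hP. Qed.

Lemma mgR_cst c : mgoodR (fun _ => c).
Proof. by move=> dd T Phi hP; exact: measurable_cst. Qed.

Lemma mgR_add f1 f2 : mgoodR f1 -> mgoodR f2 -> mgoodR (fun psi => f1 psi + f2 psi).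
Proof. by move=> m1 m2 dd T Phi hP; apply: measurable_funD; [exact: m1|exact: m2]. Qed.

Lemma mgR_mul f1 f2 : mgoodR f1 -> mgoodR f2 -> mgoodR (fun psi => f1 psi * f2 psi).
Proof. by move=> m1 m2 dd T Phi hP; apply: measurable_funM; [exact: m1|exact: m2]. Qed.

Lemma mgR_sumP (I : Type) (r : seq I) (P : pred I) (f : I -> (VV -> R) -> R) :
  (forall i, mgoodR (f i)) -> mgoodR (fun psi => \sum_(i <- r | P i) f i psi).
Proof.
move=> mf; apply: (@mgoodR_ext (fun psi => \sum_(i <- r) (if P i then f i psi else 0))).
  by move=> psi /=; rewrite [RHS]big_mkcond.
apply: mgoodR_sum => i; case: (P i); [exact: mf | exact: mgR_cst].
Qed.

Lemma mgR_Eh h : mgoodR (Eh beta h).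
Proof.
move=> dd T Phi hP; rewrite /Eh.
apply: measurableT_comp; first exact: measurable_expR.
have := @mgR_add (fun psi => beta * \sum_(e in eds) psi e.1 * psi e.2)
  (fun psi => beta * \sum_(x in bx) h x * psi x); apply => //.
  apply: mgR_mul; first exact: mgR_cst.
  by apply: mgR_sumP => e; apply: mgR_mul; exact: mgR_coord.
apply: mgR_mul; first exact: mgR_cst.
by apply: mgR_sumP => x; apply: mgR_mul; [exact: mgR_cst|exact: mgR_coord].
Qed.

Lemma mgR_comp (f : (VV -> R) -> R) (Tr : (VV -> R) -> (VV -> R)) :
  mgoodR f ->
  (forall dd (X : measurableType dd) (Phi : X -> VV -> R),
     coordm Phi -> coordm (fun t => Tr (Phi t))) ->
  mgoodR (fun psi => f (Tr psi)).
Proof. by move=> mf hT dd X Phi hP; apply: (mf _ _ (fun t => Tr (Phi t))); exact: hT. Qed.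

Lemma coordm_flip S dd (X : measurableType dd) (Phi : X -> VV -> R) :
  coordm Phi -> coordm (fun t => flip S (Phi t)).
Proof.
move=> hP v; rewrite /flip; case: (v \in S); last exact: hP.
exact: measurableT_comp (@oppr_measurable R setT) (hP v).
Qed.

Lemma coordm_abs dd (X : measurableType dd) (Phi : X -> VV -> R) :
  coordm Phi -> coordm (fun t => fun x => `|Phi t x|).
Proof. by move=> hP v; exact: measurableT_comp (@normr_measurable R setT) (hP v). Qed.

Lemma Eh_local h (p1 p2 : VV -> R) : {in bx, p1 =1 p2} -> Eh beta h p1 = Eh beta h p2.
Proof.
move=> e12; rewrite /Eh; congr (expR (beta * _ + beta * _)).
  apply: eq_bigr => e eE; have /andP [b1 b2] := edges_box eE.
  by rewrite !e12.
by apply: eq_bigr => x xb; rewrite e12.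
Qed.

Lemma reindex_abs h (psi : VV -> R) :
  \sum_(S : {set VV} | S \subset bx) Eh beta h (flip S psi) =
  \sum_(S : {set VV} | S \subset bx) Eh beta h (flip S (fun x => `|psi x|)).
Proof.
pose N := [set v in bx | psi v < 0].
pose sd (S : {set VV}) := (S :\: N) :|: (N :\: S).
have in_sd : forall S x, (x \in sd S) = (x \in S) (+) (x \in N).
  by move=> S x; rewrite /sd finset.in_setU !finset.in_setD; case: (x \in S); case: (x \in N).
have sdK : involutive sd.
  by move=> S; apply/finset.setP => x; rewrite !in_sd addbK.
have Nb : N \subset bx by apply/fintype.subsetP => x; rewrite /N finset.in_set => /andP [].
rewrite [RHS](reindex_inj (can_inj sdK)) /=.
apply: eq_big => S.
  apply/idP/idP => /fintype.subsetP h0; apply/fintype.subsetP => x.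
    by rewrite in_sd; case: (x \in N) (fintype.subsetP Nb x); case: (x \in S) (h0 x) => //= ->.
  case: (boolP (x \in N)) => [/(fintype.subsetP Nb) //|nN xS].
  by apply: h0; rewrite in_sd xS (negbTE nN).
move=> Sb; apply: Eh_local => x xb; rewrite /flip in_sd /N finset.in_set xb /=.
case: (x \in S); case: (ltrP (psi x) 0) => h0 /=.
- by rewrite ltr0_norm.
- by rewrite ger0_norm.
- by rewrite ltr0_norm // opprK.
- by rewrite ger0_norm.
Qed.

End Final.


Lemma fine_mulc (R : realType) (c : R) (x : \bar R) : 0 < c -> fine (c%:E * x)%E = c * fine x.
Proof.
move=> c0; case: x => [r| |].
- by rewrite -EFinM.
- by rewrite gt0_muley ?lte_fin //= mulr0.
- by rewrite gt0_muleNy ?lte_fin //= mulr0.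
Qed.

Lemma einf_ge0 (R : realType) (u : (\bar R)^nat) : (forall n, 0 <= u n)%E -> (0 <= limn_einf u)%E.
Proof.
move=> u0; rewrite limn_einf_lim; apply: lime_ge; first exact: is_cvg_einfs.
apply: nearW => n; apply/ereal_infP => _ [m _ <-]; exact: u0.
Qed.

Section Final2.
Variables (R : realType) (g a : R) (d L M : nat) (beta : R).
Local Notation VV := (V d L M).
Local Notation thk := (thick R d L M).
Local Notation bx := (box d L M).
Local Notation eds := (edges d L M).
Local Notation p0 := (fun _ : VV => 0 : R).

Definition nS := #|[set S : {set VV} | S \subset bx]|.

Lemma nS_gt0 : (0 < nS)%N.
Proof. by apply/card_gt0P; exists finset.set0; rewrite finset.in_set finset.sub0set. Qed.

Lemma flip0 (S : {set VV}) : flip S p0 = p0.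
Proof. by apply/funext => v; rewrite /flip; case: (v \in S); rewrite ?oppr0. Qed.

Lemma mgR_B h (B : (VV -> R) -> R)
  (hB : forall psi, 2 * \sum_(S : {set VV} | S \subset bx) Eh beta h (flip S (fun x => `|psi x|)) = B psi) :
  mgoodR B.
Proof.
apply: (mgoodR_ext hB); apply: mgR_mul; first exact: mgR_cst.
apply: mgR_sumP => S; apply: (mgR_comp (mgR_Eh beta h)) => dd X Phi hP.
exact/coordm_flip/coordm_abs.
Qed.

Lemma B_ge0 h (B : (VV -> R) -> R)
  (hB : forall psi, 2 * \sum_(S : {set VV} | S \subset bx) Eh beta h (flip S (fun x => `|psi x|)) = B psi) psi :
  0 <= B psi.
Proof. by rewrite -hB mulr_ge0 // sumr_ge0 // => S _; rewrite expR_ge0. Qed.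

Lemma Zrel h (B : (VV -> R) -> R)
  (hB : forall psi, 2 * \sum_(S : {set VV} | S \subset bx) Eh beta h (flip S (fun x => `|psi x|)) = B psi) :
  Zphi4 g a beta h = (2 * nS%:R)^-1 * int_box g a (fun psi => (B psi)%:E).
Proof.
have -> : Zphi4 g a beta h =
   fine (iint g a (fun psi => (Eh beta h psi)%:E) (enum bx) p0) by [].
rewrite /int_box.
set X := iint g a (fun psi => (Eh beta h psi)%:E) (enum bx) p0.
set Y := iint g a (fun psi => (B psi)%:E) (enum bx) p0.
have mE : forall S : {set VV}, mgoodR (fun psi => Eh beta h (flip S psi)).
  by move=> S; apply: (mgR_comp (mgR_Eh beta h)) => dd X0 Phi hP; exact: coordm_flip.
have e1 : (X *+ nS = \sum_(S : {set VV} | S \subset bx)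
            iint g a (fun psi => (Eh beta h (flip S psi))%:E) (enum bx) p0)%E.
  rewrite (eq_bigr (fun _ => X)); last first.
    move=> S _; rewrite /X (iint_flip g a (F := fun psi => (Eh beta h psi)%:E)) ?flip0 //.
      exact/mgood_EFin/mgR_Eh.
    by move=> psi; rewrite lee_fin expR_ge0.
  rewrite (eq_bigl (fun S => S \in [set S : {set VV} | S \subset bx])); last first.
    by move=> S; rewrite finset.in_set.
  by rewrite sumr_const.
have e2 : (\sum_(S : {set VV} | S \subset bx)
            iint g a (fun psi => (Eh beta h (flip S psi))%:E) (enum bx) p0 =
          iint g a (fun psi => (\sum_(S : {set VV} | S \subset bx) Eh beta h (flip S psi))%:E)
            (enum bx) p0)%E.
  rewrite -big_filter -iint_sum //; last by move=> S psi; rewrite expR_ge0.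
  by congr iint; apply/funext => psi; rewrite big_filter.
have e3 : (fun psi => (\sum_(S : {set VV} | S \subset bx) Eh beta h (flip S psi))%:E) =
          (fun psi => ((2^-1) %:E * (B psi)%:E)%E).
  apply/funext => psi; rewrite reindex_abs -hB -EFinM; congr EFin.
  by rewrite mulrA mulVf ?mul1r // pnatr_eq0.
have e4 : (X *+ nS = (2^-1)%:E * Y)%E.
  rewrite e1 e2 e3 iint_scale //.
  - exact/mgood_EFin/(mgR_B hB).
  - by move=> psi; rewrite lee_fin (B_ge0 hB).
have := congr1 fine e4; rewrite -mule_natl !fine_mulc ?invr_gt0 ?ltr0n ?nS_gt0 //.
move=> h4.
have nz : (nS%:R : R) != 0 by rewrite pnatr_eq0 -lt0n nS_gt0.
apply: (mulfI nz); rewrite h4; field.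
exact: nz.
Qed.

End Final2.


Lemma wfac_ge0 (R : realType) (y : R) (b : bool) : 0 <= y -> 0 <= wfac (1 - expR (- y)) b.
Proof.
move=> y0; rewrite /wfac; apply: mulr_ge0; first exact: sqrtr_ge0.
have e1 : expR (- y) <= 1 by rewrite expR_le1 oppr_le0.
have e0 := expR_ge0 (- y).
apply: exprn_ge0; apply: divr_ge0; lra.
Qed.

Lemma rc_ge0 (R : realType) (d L M : nat) (beta : R) W U (aa : V d L M -> R) :
  0 <= beta -> (forall x, 0 <= aa x) -> 0 <= rc_weight beta W U aa.
Proof.
move=> b0 a0; rewrite rc_eq; apply: mulr_ge0; last exact: exprn_ge0.
apply: mulr_ge0; apply: prodr_ge0 => x _.
  by apply: wfac_ge0; rewrite !mulr_ge0.
by apply: wfac_ge0; rewrite !mulr_ge0 // /h_pp; case: ifP.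
Qed.

Unset Implicit Arguments.

Theorem lemma5p3 (R : realType) (g a : R) (d : nat) (hg : 0 < g) (hd : (2 <= d)%N) :
  (forall (beta : R) (L M : nat), 0 < beta -> (1 <= L)%N -> (1 <= M)%N ->
     Zpm g a d L M beta / Zpp g a d L M beta
     = Psi0 g a beta (@ghosts_disconnected R d L M)) /\
  (forall beta : R, 0 < beta -> (0 <= surface_tension g a d beta)%E).
Proof.
have cnz : forall L M, ((2 * (@nS d L M)%:R)^-1 : R) != 0.
  by move=> L M; rewrite invr_eq0 mulf_neq0 // pnatr_eq0 -lt0n nS_gt0.
split.
  move=> beta L M _ _ _.
  have Hpp := Zrel g a (fun psi => ES_pp (R:=R) (d:=d) (L:=L) (M:=M) beta (fun x => `|psi x|)).
  have Hpm := Zrel g a (fun psi => ES_pm (R:=R) (d:=d) (L:=L) (M:=M) beta (fun x => `|psi x|)).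
  by rewrite /Zpm /Zpp Hpm Hpp -mulf_div divff ?mul1r.
move=> beta bpos; rewrite /surface_tension.
apply: einf_ge0 => Lm; apply: einf_ge0 => Mm; rewrite lee_fin.
apply: divr_ge0; last by rewrite exprn_ge0 // ler0n.
set L := Lm.+1; set M := Mm.+1.
have hpp := (fun psi : V d L M -> R => ES_pp (R:=R) (d:=d) (L:=L) (M:=M) beta (fun x => `|psi x|)).
have hpm := (fun psi : V d L M -> R => ES_pm (R:=R) (d:=d) (L:=L) (M:=M) beta (fun x => `|psi x|)).
rewrite /Zpm /Zpp (Zrel g a hpm) (Zrel g a hpp) /int_box.
set c := (2 * (@nS d L M)%:R)^-1.
have c0 : 0 < c by rewrite invr_gt0 mulr_gt0 // ltr0n nS_gt0.
set Ypp := iint _ _ _ _ _; set Ypm := iint _ _ _ _ _.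
have mpp := mgood_EFin (mgR_B hpp).
have mpm := mgood_EFin (mgR_B hpm).
have Y0 : (0 <= Ypm)%E by apply: iint_ge0 => psi; rewrite lee_fin (B_ge0 hpm).
have Yle : (Ypm <= Ypp)%E.
  apply: iint_le => //; first by move=> psi; rewrite lee_fin (B_ge0 hpm).
  move=> psi; rewrite lee_fin; apply: ler_sum => W _.
  rewrite [X in _ <= X](bigID (fun U => ghosts_disconnected R W U)) /= lerDl.
  by apply: sumr_ge0 => U _; apply: rc_ge0; [exact: ltW | move=> x; exact: normr_ge0].
clearbody Ypp Ypm.
rewrite -mulf_div divff ?mul1r; last by rewrite gt_eqF.
case: (leP (fine Ypp / fine Ypm) 0) => [h0|h0]; first by rewrite ln0.
apply: ln_ge0.
have fpm : 0 < fine Ypm.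
  rewrite lt_neqAle fine_ge0 // andbT; apply/eqP => e; move: h0.
  by rewrite -e invr0 mulr0 ltxx.
have fpp : 0 < fine Ypp.
  rewrite lt_neqAle fine_ge0 ?andbT; last exact: le_trans Yle.
  by apply/eqP => e; move: h0; rewrite -e mul0r ltxx.
have fin1 : Ypm \is a fin_num by move: fpm; case: (Ypm) => [r| |] //=; rewrite ltxx.
have fin2 : Ypp \is a fin_num by move: fpp; case: (Ypp) => [r| |] //=; rewrite ltxx.
have := fine_le fin1 fin2 Yle.
by rewrite ler_pdivlMr // mul1r.
Qed.
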